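(* For $n\ge 3$ and $1\le m\le n-2$, $$a(n,m)=(n-1)\,a(n-1,m-1)+a(n-1,m).$$
   Context: For $k\ge 2$, $A_k$ is the alternating group on $\{1,\dots,k\}$, $T(A_k)=\{(1\,2)(i\,j)\mid 1\le i<j\le k\}$, and for $v\in A_k$, $\ell_{T(A_k)}(v)=\min\{r\ge 0\mid v=t_1\cdots t_r,\ t_i\in T(A_k)\}$. $a(k,m)$ denotes the number of $v\in A_k$ with $\ell_{T(A_k)}(v)=m$. *)

(* Defs.v *)
From mathcomp Require Import all_boot all_fingroup.
From mathcomp Require Import alt.
Set Implicit Arguments. Unset Strict Implicit. Unset Printing Implicit Defensive.
Local Open Scope group_scope.

(* Points {1,...,k} are represented by 'I_k = {0,...,k-1} (point p <-> p-1). *)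

Definition TA (k : nat) : {set {perm 'I_k}} :=
  [set t | [exists a : 'I_k, exists b : 'I_k, exists i : 'I_k, exists j : 'I_k,
     [&& val a == 0%N, val b == 1%N, (i < j)%N & t == tperm a b * tperm i j]]].

Definition prodT (k r : nat) (v : {perm 'I_k}) : bool :=
  [exists s : r.-tuple {perm 'I_k},
     all (fun t => t \in TA k) s && (v == \prod_(t <- s) t)].

Definition lenT_eq (k : nat) (v : {perm 'I_k}) (m : nat) : bool :=
  prodT m v && [forall r : 'I_m, ~~ prodT (val r) v].

Definition a_count (k m : nat) : nat :=
  #|[set v in ('Alt_('I_k))%g | lenT_eq v m]|.

(* Main.v *)
Require Import Defs.
From mathcomp Require Import all_boot all_fingroup alt.
From mathcomp Require Import zify.
Set Implicit Arguments. Unset Strict Implicit. Unset Printing Implicit Defensive.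
Local Open Scope group_scope.

Definition i1 k : 'I_k.+2 := Ordinal (isT : 1 < k.+2).
Definition sgm k : {perm 'I_k.+2} := tperm ord0 (i1 k).
Definition cyc (T : finType) (s : {perm T}) := #|porbits s|.
Definition g k (v : {perm 'I_k.+2}) := maxn (cyc v) (cyc (sgm k * v)).

Lemma cyc_le (T : finType) (s : {perm T}) : (cyc s <= #|T|)%N.
Proof. exact: leq_imset_card. Qed.

Lemma porbit1 (T : finType) (x : T) : porbit 1 x = [set x].
Proof. by rewrite porbit.unlock cycle1 imset_set1 /aperm perm1. Qed.

Lemma cyc1 (T : finType) : cyc (1 : {perm T}) = #|T|.
Proof.
rewrite /cyc /porbits card_imset //.
move=> x y; rewrite !porbit1 => /setP /(_ x); rewrite !inE eqxx => /esym /eqP.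
by [].
Qed.

Lemma cyc_tperm_ge (T : finType) (x y : T) (s : {perm T}) : (cyc s <= cyc (tperm x y * s) + 1)%N.
Proof.
have := porbits_mul_tperm s x y; rewrite /cyc /=.
case: eqVneq => [->|nxy]; first by rewrite porbit_id /=; lia.
case: (x \in _) => /=; lia.
Qed.

Lemma porbit_fix (T : finType) (s : {perm T}) y : s y = y -> porbit s y = [set y].
Proof.
move=> sy; apply/setP => z; rewrite inE; apply/porbitP/eqP => [[i ->]|->].
  by rewrite permX iter_fix.
by exists 0; rewrite expg0 perm1.
Qed.

Lemma cyc_tperm_fix (T : finType) (x y : T) (s : {perm T}) : s y = y -> x != y ->
  cyc (tperm x y * s) + 1 = cyc s.
Proof.
move=> sy nxy; have := porbits_mul_tperm s x y; rewrite /cyc /= porbit_fix // inE nxy /=.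
lia.
Qed.

Lemma TA_inv k (t : {perm 'I_k.+2}) : t \in TA k.+2 -> exists i j : 'I_k.+2, t = sgm k * tperm i j.
Proof.
rewrite inE => /existsP[a /existsP[b /existsP[i /existsP[j /and4P[ha hb _ /eqP->]]]]].
have -> : a = ord0 by apply: val_inj; apply/eqP.
have -> : b = i1 k by apply: val_inj; apply/eqP.
by exists i, j.
Qed.

Lemma g_step k (t w : {perm 'I_k.+2}) : t \in TA k.+2 -> (g w <= g (t * w) + 1)%N.
Proof.
move=> /TA_inv [i [j ->]].
have e1: sgm k * (sgm k * tperm i j * w) = tperm i j * w by rewrite !mulgA /sgm tperm2 mul1g.
have e2: sgm k * tperm i j = tperm (sgm k i) (sgm k j) * sgm k.
  by rewrite -tpermJ conjgE /sgm tpermV -!mulgA tperm2 mulg1.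
rewrite /g e1 e2 -mulgA.
have h1 := cyc_tperm_ge i j w.
have h2 := cyc_tperm_ge (sgm k i) (sgm k j) (sgm k * w).
rewrite geq_max; apply/andP; split.
  by apply: leq_trans h1 _; rewrite leq_add2r leq_max leqnn orbT.
by apply: leq_trans h2 _; rewrite leq_add2r leq_max leqnn.
Qed.

Lemma lower k (l : seq {perm 'I_k.+2}) : all (fun t => t \in TA k.+2) l ->
  (k.+2 <= size l + g (\prod_(t <- l) t))%N.
Proof.
elim: l => [_|t l IH /= /andP[ht hl]].
  rewrite big_nil /= /g; have := cyc1 'I_k.+2; rewrite card_ord; lia.
rewrite big_cons; have h2 := IH hl; have h1 := g_step (\prod_(t <- l) t) ht.
apply: (leq_trans h2); rewrite addn1 in h1; rewrite /= addSnnS leq_add2l; exact: h1.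
Qed.

Lemma prodTP k r (v : {perm 'I_k}) : reflect (exists l, [/\ size l = r,
   all (fun t => t \in TA k) l & v = \prod_(t <- l) t]) (prodT r v).
Proof.
apply: (iffP existsP) => [[s /andP[h /eqP->]]|[l [hs hl ->]]].
  by exists (val s); rewrite size_tuple.
have hs' : size l == r by apply/eqP.
by exists (Tuple hs'); rewrite hl eqxx.
Qed.

Definition liftp k (u : {perm 'I_k.+2}) : {perm 'I_k.+3} := lift_perm ord_max ord_max u.

Lemma liftpM k (u w : {perm 'I_k.+2}) : liftp (u * w) = liftp u * liftp w.
Proof. by rewrite /liftp lift_permM. Qed.

Lemma liftp1 k : liftp (1 : {perm 'I_k.+2}) = 1.
Proof. exact: lift_perm1. Qed.

Lemma liftp_inj k : injective (@liftp k).
Proof.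
move=> u w h; apply/permP=> x; apply: (@lift_inj _ ord_max).
by rewrite -!(lift_perm_lift ord_max) -/(liftp u) -/(liftp w) h.
Qed.

Lemma liftp_tperm k (x y : 'I_k.+2) :
  liftp (tperm x y) = tperm (lift ord_max x) (lift ord_max y).
Proof.
apply/permP => z; case: (unliftP ord_max z) => [z'|] ->.
  by rewrite /liftp lift_perm_lift inj_tperm //; apply: lift_inj.
by rewrite /liftp lift_perm_id tpermD // eq_sym neq_lift.
Qed.

Lemma liftp_sig k : liftp (sgm k) = sgm k.+1.
Proof.
by rewrite /sgm liftp_tperm; congr tperm; apply: val_inj.
Qed.

Lemma liftp_odd k (u : {perm 'I_k.+2}) : odd_perm (liftp u) = odd_perm u.
Proof. by rewrite /liftp odd_lift_perm addbb. Qed.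

Lemma liftpX k (u : {perm 'I_k.+2}) n : liftp u ^+ n = liftp (u ^+ n).
Proof.
elim: n => [|n IH]; first by rewrite !expg0 liftp1.
by rewrite !expgSr IH liftpM.
Qed.

Lemma porbit_liftp_lift k (u : {perm 'I_k.+2}) x :
  porbit (liftp u) (lift ord_max x) = lift ord_max @: porbit u x.
Proof.
apply/setP => y; apply/porbitP/imsetP => [[i ->]|[z /porbitP[i ->] ->]].
  by exists ((u ^+ i) x); [apply: mem_porbit | rewrite liftpX lift_perm_lift].
by exists i; rewrite liftpX lift_perm_lift.
Qed.

Lemma porbit_liftp_N k (u : {perm 'I_k.+2}) :
  porbit (liftp u) ord_max = [set ord_max].
Proof. by apply: porbit_fix; rewrite lift_perm_id. Qed.

Lemma cyc_iota k (u : {perm 'I_k.+2}) : cyc (liftp u) = (cyc u).+1.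
Proof.
have E : porbits (liftp u) = [set ord_max] |: ((fun S : {set 'I_k.+2} => lift ord_max @: S) @: porbits u).
  apply/setP => S; rewrite !inE; apply/imsetP/orP.
    move=> [z _ ->]; case: (unliftP ord_max z) => [z'|] ->.
      right; apply/imsetP; exists (porbit u z'); first exact: imset_f.
      exact: porbit_liftp_lift.
    by left; rewrite porbit_liftp_N.
  case=> [/eqP ->|/imsetP[S' /imsetP[z _ ->] ->]].
    by exists ord_max; rewrite ?porbit_liftp_N.
  by exists (lift ord_max z); rewrite ?porbit_liftp_lift.
rewrite /cyc E cardsU1 card_imset; last exact/imset_inj/lift_inj.
suff -> : [set ord_max] \notin (fun S : {set 'I_k.+2} => lift ord_max @: S) @: porbits u by [].
apply/imsetP => -[S _ /setP /(_ ord_max)]; rewrite inE eqxx => /esym /imsetP[z _].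
by move/eqP; rewrite (negbTE (neq_lift _ _)).
Qed.

Lemma liftp_surj k (w : {perm 'I_k.+3}) : w ord_max = ord_max ->
  exists u : {perm 'I_k.+2}, w = liftp u.
Proof.
move=> wN.
pose f x := odflt x (unlift ord_max (w (lift ord_max x))).
have K x : lift ord_max (f x) = w (lift ord_max x).
  have h : ord_max != w (lift ord_max x).
    by rewrite -{1}wN (inj_eq perm_inj) neq_lift.
  by case: (unlift_some h) => j e1 e2; rewrite /f e2 /= -e1.
have finj : injective f.
  by move=> x y /(congr1 (lift ord_max)); rewrite !K => /perm_inj /lift_inj.
exists (perm finj); apply/permP => z; case: (unliftP ord_max z) => [z'|] ->.
  by rewrite /liftp lift_perm_lift permE K.
by rewrite /liftp lift_perm_id.
Qed.

Lemma g_iota k (u : {perm 'I_k.+2}) : g (liftp u) = (g u).+1.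
Proof. by rewrite /g -liftp_sig -liftpM !cyc_iota maxnSS. Qed.

Definition tt k (j : 'I_k.+2) : {perm 'I_k.+3} :=
  sgm k.+1 * tperm (lift ord_max j) ord_max.

Lemma sigN k : sgm k.+1 ord_max = ord_max.
Proof. by rewrite /sgm tpermD // -val_eqE. Qed.

Lemma g_tt k j (u : {perm 'I_k.+2}) : g (tt j * liftp u) + 1 = g (liftp u).
Proof.
set s := liftp u.
have sN : s ord_max = ord_max by rewrite lift_perm_id.
have lN : lift ord_max j != ord_max by rewrite eq_sym neq_lift.
have e1: sgm k.+1 * (tt j * s) = tperm (lift ord_max j) ord_max * s.
  by rewrite /tt !mulgA /sgm tperm2 mul1g.
have e2: tt j * s = tperm (sgm k.+1 (lift ord_max j)) ord_max * (sgm k.+1 * s).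
  rewrite -{2}(sigN k) -tpermJ conjgE /tt /sgm tpermV !mulgA -(mulgA _ (tperm _ _) (tperm _ _)).
  by rewrite tperm2 mulg1.
have h1 := cyc_tperm_fix sN lN.
have h2 : cyc (tperm (sgm k.+1 (lift ord_max j)) ord_max * (sgm k.+1 * s)) + 1 = cyc (sgm k.+1 * s).
  apply: cyc_tperm_fix; first by rewrite permM sigN.
  by rewrite -{2}(sigN k) (inj_eq perm_inj).
rewrite /g e1 e2 -h1 -h2 !addn1 maxnSS maxnC //.
Qed.

Lemma tt_TA k j : tt j \in TA k.+3.
Proof.
rewrite inE; apply/existsP; exists ord0; apply/existsP; exists (i1 k.+1).
apply/existsP; exists (lift ord_max j); apply/existsP; exists ord_max.
by rewrite /tt /sgm /= /bump (leqNgt k.+2 j) ltn_ord add0n ltn_ord eqxx.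
Qed.

Lemma bumpK2 k (x : 'I_k.+2) : bump k.+2 x = x.
Proof. by rewrite /bump (leqNgt k.+2 x) ltn_ord add0n. Qed.

Lemma liftp_TA k (t : {perm 'I_k.+2}) : t \in TA k.+2 -> liftp t \in TA k.+3.
Proof.
rewrite !inE => /existsP[a /existsP[b /existsP[i /existsP[j /and4P[ha hb hij /eqP->]]]]].
apply/existsP; exists (lift ord_max a); apply/existsP; exists (lift ord_max b).
apply/existsP; exists (lift ord_max i); apply/existsP; exists (lift ord_max j).
by rewrite /= !bumpK2 ha hb hij liftpM !liftp_tperm eqxx.
Qed.

Lemma tt_odd k (j : 'I_k.+2) : odd_perm (tt j) = false.
Proof.
have h1 : ((ord0 : 'I_k.+3) != i1 k.+1) = true by rewrite -val_eqE.
by rewrite /tt /sgm odd_permM !odd_tperm h1 eq_sym neq_lift.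
Qed.

Definition stat k (v : {perm 'I_k.+2}) := (k.+2 - g v)%N.

Lemma g_le k (v : {perm 'I_k.+2}) : (g v <= k.+2)%N.
Proof.
have := cyc_le v; have := cyc_le (sgm k * v); rewrite card_ord => h1 h2.
by rewrite geq_max h1 h2.
Qed.

Lemma stat_iota k (u : {perm 'I_k.+2}) : stat (liftp u) = stat u.
Proof. by rewrite /stat g_iota subSS. Qed.

Lemma stat_tt k j (u : {perm 'I_k.+2}) : stat (tt j * liftp u) = (stat u).+1.
Proof.
have h := g_tt j u; rewrite g_iota addn1 in h; case: h => h.
by rewrite /stat h subSn // g_le.
Qed.

Lemma odd_tt_liftp k j (u : {perm 'I_k.+2}) : odd_perm (tt j * liftp u) = odd_perm u.
Proof. by rewrite odd_permM tt_odd liftp_odd. Qed.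

Lemma decomp k (v : {perm 'I_k.+3}) : v ord_max != ord_max ->
  exists j u, v = tt j * liftp u.
Proof.
move=> vN.
set x := sgm k.+1 (v^-1 ord_max).
have hx : ord_max != x.
  rewrite /x -{1}(sigN k) (inj_eq perm_inj); apply: contra vN => /eqP e.
  by rewrite {1}e permKV.
case: (unlift_some hx) => j ej _.
have e : tt j (v^-1 ord_max) = ord_max.
  by rewrite /tt permM -/x ej tpermL.
have wN : ((tt j)^-1 * v) ord_max = ord_max.
  by rewrite permM -{1}e permK permKV.
case: (liftp_surj wN) => u eu; exists j, u.
by rewrite -eu mulKVg.
Qed.

Lemma ttinvN k j (u : {perm 'I_k.+2}) :
  (tt j * liftp u)^-1 ord_max = sgm k.+1 (lift ord_max j).
Proof.
apply: (@perm_inj _ (tt j * liftp u)); rewrite permKV permM /tt permM.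
by rewrite /sgm tpermK tpermL lift_perm_id.
Qed.

Lemma upper k (v : {perm 'I_k.+2}) : v \in 'Alt_('I_k.+2) ->
  exists l, [/\ size l = stat v, all (fun t => t \in TA k.+2) l & v = \prod_(t <- l) t].
Proof.
elim: k v => [|k IH] v hv.
  move: hv; rewrite trivial_Alt_2 ?card_ord // inE => /eqP ->.
  exists [::]; split => //; last by rewrite big_nil.
  rewrite /stat; apply/esym/eqP; rewrite subn_eq0 /g.
  by rewrite leq_max cyc1 card_ord leqnn.
have liftp_prod l : liftp (\prod_(t <- l) t) = \prod_(t <- map (@liftp k) l) t.
  by rewrite big_map; apply: (big_morph _ (@liftpM k) (liftp1 k)).
case: (eqVneq (v ord_max) ord_max) => [vN|vN].
  case: (liftp_surj vN) => u ev; subst v.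
  move: hv; rewrite !Alt_even liftp_odd -Alt_even => /IH [l [hs hl hp]].
  exists (map (@liftp k) l); split.
  - by rewrite size_map stat_iota.
  - by rewrite all_map; apply/allP => t /(allP hl) /liftp_TA.
  - by rewrite hp liftp_prod.
case: (decomp vN) => j [u eu]; subst v.
move: hv; rewrite !Alt_even odd_tt_liftp -Alt_even => /IH [l [hs hl hp]].
exists (tt j :: map (@liftp k) l); split.
- by rewrite /= size_map stat_tt hs.
- by rewrite /= tt_TA all_map; apply/allP => t /(allP hl) /liftp_TA.
- by rewrite big_cons hp liftp_prod.
Qed.

Lemma lenT_stat k (v : {perm 'I_k.+2}) m : v \in 'Alt_('I_k.+2) ->
  lenT_eq v m = (m == stat v).
Proof.
move=> hv.
have L r : prodT r v -> (stat v <= r)%N.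
  case/prodTP => l [<- hl ->]; have := lower hl; rewrite /stat leq_subLR addnC.
  by [].
have U : prodT (stat v) v.
  by case: (upper hv) => l [hs hl hp]; apply/prodTP; exists l.
apply/idP/eqP.
  case/andP => hm /forallP hr; apply/eqP; rewrite eqn_leq L // andbT.
  rewrite leqNgt; apply/negP => lt; have := hr (Ordinal lt).
  by rewrite /= U.
move=> ->; rewrite /lenT_eq U /=; apply/forallP => r; apply/negP => /L.
by rewrite leqNgt ltn_ord.
Qed.

Definition B k m := [set v in 'Alt_('I_k.+2) | stat v == m].

Lemma a_countE k m : a_count k.+2 m = #|B k m|.
Proof.
rewrite /a_count /B; apply: eq_card => v.
rewrite !setIdE in_setI [RHS]in_setI.
case hv: (v \in 'Alt_('I_k.+2)); last by rewrite !andFb.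
by rewrite !andTb !in_set (lenT_stat m hv) eq_sym.
Qed.

Lemma inB k m v : (v \in B k m) = (v \in 'Alt_('I_k.+2)) && (stat v == m).
Proof. by rewrite /B setIdE in_setI [X in _ && X]in_set. Qed.

Definition F k (p : 'I_k.+2 * {perm 'I_k.+2}) : {perm 'I_k.+3} := tt p.1 * liftp p.2.

Lemma F_inj k : injective (@F k).
Proof.
move=> [j u] [j' u'] /= e.
have : sgm k.+1 (lift ord_max j) = sgm k.+1 (lift ord_max j').
  by rewrite -(ttinvN j u) -(ttinvN j' u'); move: e; rewrite /F /= => ->.
move/perm_inj/lift_inj => ej; subst j'.
congr pair; apply: liftp_inj; apply: (mulgI (tt j)); exact: e.
Qed.

Lemma count_step k m : (1 <= m)%N ->
  #|B k.+1 m| = (k.+2 * #|B k m.-1| + #|B k m|)%N.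
Proof.
move=> m1.
have E : B k.+1 m = (@liftp k @: B k m) :|: (@F k @: setX setT (B k m.-1)).
  apply/setP => v; apply/idP/idP.
    rewrite inB => /andP[hv /eqP hm]; rewrite in_setU.
    case: (eqVneq (v ord_max) ord_max) => vN.
      case: (liftp_surj vN) => u ev; subst v.
      apply/orP; left; apply/imsetP; exists u => //.
      move: hv; rewrite inB !Alt_even liftp_odd => ->.
      by rewrite -hm stat_iota eqxx.
    case: (decomp vN) => j [u eu]; subst v.
    apply/orP; right; apply/imsetP; exists (j, u) => //.
    move: hv; rewrite in_setX in_setT inB /= !Alt_even odd_tt_liftp => ->.
    by rewrite -hm stat_tt /= eqxx.
  rewrite in_setU => /orP[/imsetP[u hu ->]|/imsetP[[j u] hju ->]].
    by move: hu; rewrite !inB !Alt_even liftp_odd stat_iota.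
  move: hju; rewrite in_setX in_setT andTb !inB => /andP[hu /eqP hm].
  by rewrite /F /= Alt_even odd_tt_liftp -Alt_even hu stat_tt hm prednK // eqxx.
have D : (@liftp k @: B k m) :&: (@F k @: setX setT (B k m.-1)) = set0.
  apply/setP => x; rewrite in_setI in_set0; apply/negP.
  move=> /andP[/imsetP[u _ ->] /imsetP[[j w] _ e]].
  move: (congr1 (fun p : {perm 'I_k.+3} => p ord_max) e).
  rewrite /F /= /liftp lift_perm_id permM /tt permM sigN tpermR lift_perm_lift.
  by move/eqP; rewrite (negbTE (neq_lift _ _)).
rewrite E cardsU D cards0 subn0 (card_imset _ (@liftp_inj k)) (card_imset _ (@F_inj k)).
by rewrite cardsX cardsT card_ord addnC.
Qed.

Theorem corollary5p4 (n m : nat) :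
  (3 <= n)%N -> (1 <= m)%N -> (m <= n - 2)%N ->
  a_count n m = ((n - 1) * a_count (n - 1) (m - 1) + a_count (n - 1) m)%N.
Proof.
case: n => [|[|[|k]]] // _ m1 _.
rewrite subn1 /= (a_countE k.+1) !a_countE.
rewrite subn1; exact: count_step.
Qed.
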